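(* For every $n\ge 2$, none of the unimodal spi-logics $\mathsf{SPi}+\{\iota^n_{fun}\}$, $\mathsf{SPi}+\{\iota_{refl},\iota^n_{fun}\}$, $\mathsf{SPi}+\{\iota_{trans},\iota^n_{fun}\}$, $\mathsf{SPi}+(\Sigma_{qo}\cup\{\iota^n_{fun}\})$ and $\mathsf{SPi}+(\Sigma_{equiv}\cup\{\iota^n_{fun}\})$ is complex.
   Context: Unimodal setting: one diamond $\Diamond$. Sp-formulas: built from propositional variables and $\top$ by $\wedge$ and $\Diamond$; sp-implications $\sigma\to\tau$. A SLO is an algebra $(A,\wedge,\top,\Diamond)$ with $(A,\wedge,\top)$ a meet-semilattice with top and $\Diamond$ monotone; it validates $\sigma\to\tau$ if $\sigma[\mathfrak a]\le\tau[\mathfrak a]$ for all valuations. Frames $(W,R)$ with standard Kripke semantics. For a set $\Sigma$, $\mathsf{SPi}+\Sigma$ is the set of sp-implications valid in all SLOs validating $\Sigma$ (a spi-logic). For a frame $\mathfrak F=(W,R)$, $\mathfrak F^\star=(2^W,\cap,W,\Diamond^+)$ with $\Diamond^+X=\{w\mid\exists v\in X,(w,v)\in R\}$. A spi-logic $L$ is complex if every SLO validating $L$ embeds (injectively, preserving $\wedge,\top,\Diamond$) into $\mathfrak F^\star$ for some frame $\mathfrak F$ validating $L$. Notation: $\iota_{refl}=(p\to\Diamond p)$, $\iota_{trans}=(\Diamond\Diamond p\to\Diamond p)$, $\iota_{sym}=(q\wedge\Diamond p\to\Diamond(p\wedge\Diamond q))$, $\Sigma_{qo}=\{\iota_{refl},\iota_{trans}\}$,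 $\Sigma_{equiv}=\{\iota_{refl},\iota_{trans},\iota_{sym}\}$, and for $P=\{p_0,\dots,p_n\}$, $\iota^n_{fun}=\big(\bigwedge_{Q\subseteq P,|Q|=n}\Diamond\bigwedge Q\to\Diamond\bigwedge P\big)$ (its frames are those where every point has at most $n$ successors). *)

(* Defs.v *)
From mathcomp Require Import all_boot.
Set Implicit Arguments. Unset Strict Implicit. Unset Printing Implicit Defensive.

Inductive fml : Type :=
| Var : nat -> fml
| Top : fml
| And : fml -> fml -> fml
| Dia : fml -> fml.

Definition spi := (fml * fml)%type.

Fixpoint bigand (l : seq fml) : fml :=
  match l with
  | [::] => Top
  | [:: x] => x
  | x :: l' => And x (bigand l')
  end.

Record SLO : Type := {
  car :> Type;
  meet : car -> car -> car;
  top : car;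
  dia : car -> car;
  meetA : forall x y z, meet x (meet y z) = meet (meet x y) z;
  meetC : forall x y, meet x y = meet y x;
  meetxx : forall x, meet x x = x;
  meetT : forall x, meet x top = x;
  dia_mono : forall x y, meet x y = x -> meet (dia x) (dia y) = dia x
}.

Definition sle (A : SLO) (x y : A) : Prop := meet x y = x.

Fixpoint eval (A : SLO) (v : nat -> A) (f : fml) : A :=
  match f with
  | Var i => v i
  | Top => top A
  | And f1 f2 => meet (eval v f1) (eval v f2)
  | Dia f1 => dia (eval v f1)
  end.

Definition slo_valid (A : SLO) (i : spi) : Prop :=
  forall v : nat -> A, sle (eval v i.1) (eval v i.2).

Definition SPi_plus (Sigma : spi -> Prop) : spi -> Prop :=
  fun i => forall A : SLO, (forall s, Sigma s -> slo_valid A s) -> slo_valid A i.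

Definition slo_validates_logic (A : SLO) (L : spi -> Prop) : Prop :=
  forall i, L i -> slo_valid A i.

Fixpoint sat (W : Type) (R : W -> W -> Prop) (V : nat -> W -> Prop) (w : W) (f : fml) : Prop :=
  match f with
  | Var i => V i w
  | Top => True
  | And f1 f2 => sat R V w f1 /\ sat R V w f2
  | Dia f1 => exists u, R w u /\ sat R V u f1
  end.

Definition frame_valid (W : Type) (R : W -> W -> Prop) (i : spi) : Prop :=
  forall (V : nat -> W -> Prop) (w : W), sat R V w i.1 -> sat R V w i.2.

Definition frame_validates_logic (W : Type) (R : W -> W -> Prop) (L : spi -> Prop) : Prop :=
  forall i, L i -> frame_valid R i.

(** Embedding of an SLO into the complex algebra F^* = (2^W, cap, W, Dia^+),
    subsets of W being predicates compared extensionally. *)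
Definition embeds_into_complex (A : SLO) (W : Type) (R : W -> W -> Prop) : Prop :=
  exists h : A -> (W -> Prop),
    (forall a b : A, (forall w, h a w <-> h b w) -> a = b) /\
    (forall a b : A, forall w, h (meet a b) w <-> (h a w /\ h b w)) /\
    (forall w, h (top A) w <-> True) /\
    (forall a : A, forall w, h (dia a) w <-> exists u, R w u /\ h a u).

Definition complex (L : spi -> Prop) : Prop :=
  forall A : SLO, slo_validates_logic A L ->
    exists (W : Type) (R : W -> W -> Prop),
      frame_validates_logic R L /\ embeds_into_complex A R.

(** The sp-implications of the paper. p = Var 0, q = Var 1. *)
Definition iota_refl : spi := (Var 0, Dia (Var 0)).
Definition iota_trans : spi := (Dia (Dia (Var 0)), Dia (Var 0)).
Definition iota_sym : spi :=
  (And (Var 1) (Dia (Var 0)), Dia (And (Var 0) (Dia (Var 1)))).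

(** iota^n_fun with P = {p_0,...,p_n} (p_i = Var i):
    /\_{Q subset P, |Q| = n} <> /\Q  ->  <> /\P *)
Definition conj_of (n : nat) (Q : {set 'I_n.+1}) : fml :=
  bigand [seq Var (nat_of_ord i) | i <- enum Q].

Definition iota_fun (n : nat) : spi :=
  (bigand [seq Dia (conj_of Q) | Q <- enum [pred Q : {set 'I_n.+1} | #|Q| == n]],
   Dia (conj_of [set: 'I_n.+1])).

Fixpoint has_mem (i : spi) (l : seq spi) : Prop :=
  match l with [::] => False | x :: l' => x = i \/ has_mem i l' end.
Definition setof (l : seq spi) : spi -> Prop := fun i => has_mem i l.

(* Main.v *)
Require Import Defs.
From mathcomp Require Import all_boot.

Inductive el := EC | EA of nat | ET.

Definition emeet (x y : el) : el :=
  match x, y with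
  | EC, _ => EC | _, EC => EC | ET, y => y | x, ET => x
  | EA i, EA j => if i == j then EA i else EC end.

Definition edia (x : el) : el := if x is EC then EC else ET.

Lemma emeetA x y z : emeet x (emeet y z) = emeet (emeet x y) z.
Proof.
case: x => [|i|]; case: y => [|j|]; case: z => [|k|] //=;
repeat (case: eqP => //= ?; subst) ; try (rewrite eqxx //=); try (case: eqP => //=).
Qed.

Lemma emeetC x y : emeet x y = emeet y x.
Proof.
case: x => [|i|]; case: y => [|j|] //=; rewrite eq_sym; case: eqP => // ->//.
Qed.

Lemma emeetxx x : emeet x x = x.
Proof. by case: x => //= i; rewrite eqxx. Qed.

Lemma emeetT x : emeet x ET = x.
Proof. by case: x. Qed.

Lemma emono x y : emeet x y = x -> emeet (edia x) (edia y) = edia x.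
Proof. by case: x => [|i|]; case: y => [|j|] //=. Qed.

Definition Ael : SLO := Build_SLO emeetA emeetC emeetxx emeetT emono.

Lemma eval_bigand_cons (A : SLO) (v : nat -> A) x s :
  eval v (bigand (x :: s)) = meet (eval v x) (eval v (bigand s)).
Proof. by case: s => [|y s] //=; rewrite meetT. Qed.

Lemma sle_member (A : SLO) (v : nat -> A) (T : eqType) (F : T -> fml) s x :
  x \in s -> sle (eval v (bigand (map F s))) (eval v (F x)).
Proof.
rewrite /sle; elim: s => [|y s IH] //=; rewrite inE eval_bigand_cons => /orP [/eqP ->|/IH H].
  by rewrite -meetA [meet (eval v (bigand _)) _]meetC meetA meetxx.
by rewrite -meetA H.
Qed.

Lemma sle_meet (A : SLO) (e x y : A) : sle e x -> sle e y -> sle e (meet x y).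
Proof. by rewrite /sle => H1 H2; rewrite meetA H1 H2. Qed.

Lemma emeet_EA x y k : emeet x y = EA k -> x = EA k \/ y = EA k.
Proof. case: x => [|i|]; case: y => [|j|] //=; try tauto. case: eqP => //; tauto. Qed.

Lemma evalEA (T : eqType) (g : T -> nat) (v : nat -> Ael) s k :
  eval v (bigand [seq Var (g i) | i <- s]) = EA k -> exists2 i, i \in s & v (g i) = EA k.
Proof.
elim: s => [|y s IH] //=; rewrite (@eval_bigand_cons Ael) => /emeet_EA [H|/IH [i Hi H]].
  by exists y; rewrite ?inE ?eqxx.
by exists i; rewrite ?inE ?Hi ?orbT.
Qed.

Lemma evalEC (T : eqType) (g : T -> nat) (v : nat -> Ael) s :
  eval v (bigand [seq Var (g i) | i <- s]) = EC ->
  exists i j, [/\ i \in s, j \in s & emeet (v (g i)) (v (g j)) = EC].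
Proof.
elim: s => [|y s IH] //=; rewrite (@eval_bigand_cons Ael) /=.
case E: (v (g y)) => [|a|].
- by move=> _; exists y, y; rewrite inE eqxx E.
- case E2: (eval v (bigand _)) => [|b|] //=.
  + move=> _; case: (IH E2) => i [j [Hi Hj H]]; exists i, j; by rewrite !inE Hi Hj !orbT.
  + case: eqP => // Hab _. case: (@evalEA _ _ _ _ _ E2) => j Hj Ej.
    exists y, j; rewrite !inE eqxx Hj orbT E Ej /=. by case: eqP.
- case E2: (eval v (bigand _)) => [|b|] //= _; case: (IH E2) => i [j [Hi Hj H]]; exists i, j; by rewrite !inE Hi Hj !orbT.
Qed.

Lemma valid_fun n : 2 <= n -> slo_valid Ael (iota_fun n).
Proof.
move=> hn v /=.
case EP: (eval v (conj_of [set: 'I_n.+1])) => [|a|]; last 2 first.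
  by apply: (@meetT Ael). by apply: (@meetT Ael).
have [i [j [Hi Hj Hij]]] := @evalEC _ _ _ _ EP.
have [k Hk] : exists k : 'I_n.+1, k \in ~: [set i; j].
  apply/card_gt0P; rewrite cardsCs setCK card_ord cards2.
  by case: (i != j); rewrite /= subn_gt0 ltnS ?(leq_trans _ hn).
rewrite in_setC !inE negb_or in Hk; case/andP: Hk => Hki Hkj.
pose Q := [set~ k].
have HQ : Q \in enum [pred Q : {set 'I_n.+1} | #|Q| == n].
  by rewrite mem_enum inE cardsC1 card_ord.
have EQ : eval v (conj_of Q) = EC.
  have H1 : sle (eval v (conj_of Q)) (v i).
    by apply: (@sle_member Ael v _ (fun i : 'I_n.+1 => Var i)); rewrite mem_enum !inE eq_sym.
  have H2 : sle (eval v (conj_of Q)) (v j).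
    by apply: (@sle_member Ael v _ (fun i : 'I_n.+1 => Var i)); rewrite mem_enum !inE eq_sym.
  have := @sle_meet _ _ _ _ H1 H2; rewrite /sle /= Hij.
  by case: (eval v (conj_of Q)).
have := @sle_member Ael v _ (fun Q => Dia (conj_of Q)) _ _ HQ.
by rewrite /= EQ.
Qed.

Lemma valid_refl : slo_valid Ael iota_refl.
Proof. by move=> v; rewrite /sle /=; case: (v 0) => //= i; rewrite eqxx. Qed.

Lemma valid_trans : slo_valid Ael iota_trans.
Proof. by move=> v; rewrite /sle /=; case: (v 0). Qed.

Lemma valid_sym : slo_valid Ael iota_sym.
Proof.
move=> v; rewrite /sle /=; case: (v 0) => [|i|]; case: (v 1) => [|j|] //=; rewrite ?eqxx //.
Qed.

Lemma sat_bigand (W : Type) (R : W -> W -> Prop) V w (T : eqType) (F : T -> fml) s :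
  sat R V w (bigand (map F s)) <-> (forall x, x \in s -> sat R V w (F x)).
Proof.
elim: s => [|y s IH] /=; first by split.
have Hc : sat R V w (bigand (F y :: map F s)) <-> sat R V w (F y) /\ sat R V w (bigand (map F s)).
  by case: (map F s) => //=; tauto.
split.
  by move=> /Hc [H1 /IH H2] x; rewrite inE => /orP [/eqP ->|/H2].
by move=> H; apply/Hc; split; [|apply/IH => x Hx]; apply: H; rewrite inE ?eqxx ?Hx ?orbT.
Qed.

Lemma noncomplex n (hn : 2 <= n) (l : seq spi) :
  has_mem (iota_fun n) l -> (forall s, has_mem s l -> slo_valid Ael s) ->
  ~ complex (SPi_plus (setof l)).
Proof.
move=> Hf Hl Hc.
have [W [R [HF [h [inj [hm [ht hd]]]]]]] := Hc Ael (fun i Hi => Hi Ael Hl).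
have HFr : frame_valid R (iota_fun n) by apply: HF => A HA; apply: HA.
suff : EC = ET by [].
apply: inj => w; split => _; first by apply: (proj2 (ht w)).
have succ : forall k : nat, exists u, R w u /\ h (EA k) u.
  by move=> k; apply/(hd (EA k) w)/(ht w).
pose V := fun (i : nat) (x : W) => exists j, j <> i /\ j <= n /\ h (EA j) x.
have := HFr V w; rewrite /iota_fun /=.
case.
  apply/(@sat_bigand _ _ _ _ _ (fun Q => Dia (conj_of Q))) => Q.
  rewrite mem_enum inE => /eqP HQ.
  have [k Hk] : exists k : 'I_n.+1, k \in ~: Q.
    by apply/card_gt0P; rewrite cardsCs setCK card_ord HQ subSnn.
  have [u [Ru Hu]] := succ k.
  exists u; split => //.
  apply/(@sat_bigand _ _ _ _ _ (fun i : 'I_n.+1 => Var i)) => i; rewrite mem_enum => Hi /=.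
  exists k; split; last by split; [rewrite -ltnS ltn_ord|].
  move=> E; have E' : k = i by apply: val_inj.
  by rewrite E' inE Hi in Hk.
move=> x [Rx Hx].
have Hx' := (proj1 (@sat_bigand _ _ _ _ _ (fun i : 'I_n.+1 => Var i) _) Hx).
have [j1 [Hj1 [Lj1 H1]]] := Hx' ord0 ltac:(by rewrite mem_enum inE).
have [j2 [Hj2 [Lj2 H2]]] := Hx' (Ordinal (Lj1 : j1 < n.+1)) ltac:(by rewrite mem_enum inE).
have HC : h EC x.
  have := proj2 (hm (EA j2) (EA j1) x) (conj H2 H1).
  by rewrite /= ifN //; apply/eqP.
by apply: (proj2 (hd EC w)); exists x.
Qed.

Theorem theorem7p2 (n : nat) (hn : 2 <= n) :
  ~ complex (SPi_plus (setof [:: iota_fun n])) /\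
  ~ complex (SPi_plus (setof [:: iota_refl; iota_fun n])) /\
  ~ complex (SPi_plus (setof [:: iota_trans; iota_fun n])) /\
  ~ complex (SPi_plus (setof [:: iota_refl; iota_trans; iota_fun n])) /\
  ~ complex (SPi_plus (setof [:: iota_refl; iota_trans; iota_sym; iota_fun n])).
Proof.
have Vf := @valid_fun n hn.
split; [|split; [|split; [|split]]]; apply: (@noncomplex n hn); rewrite /=; try tauto;
move=> s; repeat (case=> [<-|]; first by [apply: valid_refl|apply: valid_trans|apply: valid_sym|apply: Vf]); done.
Qed.
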